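(* Let $m_1\in\mathbb N$, $\theta=(\theta_1,\dots,\theta_{m_1})$ with $\theta_i>0$, and let $u=(u_1,\dots,u_{m_1})$ be a function of $t$ with values in $[0,\infty)^{m_1}$, differentiable in $t$. For integers $p\ge0$ let $\mathcal H_p[u]=\sum_{\beta\in\mathbb Z_+^{m_1},|\beta|=p}\binom{p}{\beta}\theta^{\beta^2}u^\beta$. Then $\partial_t\mathcal H_0[u]=0$, $\partial_t\mathcal H_1[u]=\sum_{j=1}^{m_1}\theta_j\partial_tu_j$, and for every integer $p\ge2$, $$\partial_t\mathcal H_p[u]=\sum_{|\beta|=p-1}\binom{p}{\beta}\theta^{\beta^2}u^\beta\sum_{j=1}^{m_1}\theta_j^{2\beta_j+1}\partial_tu_j.$$
   Context: $\mathbb Z_+^{m}$ is the set of $m$-tuples of nonnegative integers; for $\beta\in\mathbb Z_+^m$, $|\beta|=\sum_i\beta_i$, $\beta^2=(\beta_1^2,\dots,\beta_m^2)$, $z^\alpha=\prod_iz_i^{\alpha_i}$ with $0^0=1$, and $\binom{p}{\beta}=\frac{p!}{\beta_1!\cdots\beta_m!}$ (also used when $|\beta|<p$). *)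

(* Defs.v *)
From HB Require Import structures.
From mathcomp Require Import all_boot all_order all_algebra.
From mathcomp Require Import all_classical all_reals all_analysis.
Set Implicit Arguments. Unset Strict Implicit. Unset Printing Implicit Defensive.
Import Order.TTheory GRing.Theory Num.Theory.
Local Open Scope ring_scope.

(* Sum over multi-indices beta in Z_+^m with |beta| = p.
   A multi-index is encoded as a finite function 'I_m -> 'I_p.+1
   (every entry of a multi-index with |beta| = p is <= p). *)
Definition misum {R : realType} (m p : nat) (F : ('I_m -> nat) -> R) : R :=
  \sum_(b : {ffun 'I_m -> 'I_p.+1} | (\sum_(j < m) (b j : nat))%N == p)
     F (fun j => (b j : nat)).

(* binom(p, beta) = p! / (beta_1! ... beta_m!)  (also used when |beta| < p) *)
Definition multinom {R : realType} (m p : nat) (b : 'I_m -> nat) : R :=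
  (p`!)%:R / (\prod_(j < m) ((b j)`!)%:R).

(* z^alpha = prod_i z_i^alpha_i with 0^0 = 1 *)
Definition mpow {R : realType} (m : nat) (z : 'I_m -> R) (a : 'I_m -> nat) : R :=
  \prod_(j < m) z j ^+ a j.

Definition msq (m : nat) (b : 'I_m -> nat) : 'I_m -> nat := fun j => (b j ^ 2)%N.

Definition Hp {R : realType} (m : nat) (theta : 'I_m -> R) (p : nat)
  (v : 'I_m -> R) : R :=
  misum p (fun b => multinom p b * mpow theta (msq b) * mpow v b).

(* Main.v *)
Require Import Defs.
From HB Require Import structures.
From mathcomp Require Import all_boot all_order all_algebra.
From mathcomp Require Import all_classical all_reals all_analysis.
From mathcomp Require Import zify ring.
Import Order.TTheory GRing.Theory Num.Theory.
Local Open Scope ring_scope.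

Section H.
Variable R : realType.

Lemma is_derive_bigsum (I : Type) (r : seq I) (P : pred I) (h : I -> R -> R)
  (dh : I -> R) (x : R) :
  (forall i, P i -> is_derive x 1 (h i) (dh i)) ->
  is_derive x 1 (fun s => \sum_(i <- r | P i) h i s) (\sum_(i <- r | P i) dh i).
Proof.
move=> H; elim: r => [|a r IH].
  have -> : (fun s => \sum_(i <- [::] | P i) h i s) = cst 0.
    by apply/funext => s; rewrite big_nil.
  rewrite big_nil; exact: is_derive_cst.
case Pa: (P a).
  have -> : (fun s => \sum_(i <- a :: r | P i) h i s)
      = h a + (fun s => \sum_(i <- r | P i) h i s).
    by apply/funext => s; rewrite big_cons Pa.
  rewrite big_cons Pa; apply: is_deriveD => //; exact: H.
have -> : (fun s => \sum_(i <- a :: r | P i) h i s)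
      = (fun s => \sum_(i <- r | P i) h i s).
  by apply/funext => s; rewrite big_cons Pa.
by rewrite big_cons Pa.
Qed.

Lemma is_derive_bigprod (m : nat) (g : 'I_m -> R -> R) (dg : 'I_m -> R) (x : R) :
  (forall i, is_derive x 1 (g i) (dg i)) ->
  is_derive x 1 (fun s => \prod_(i < m) g i s)
    (\sum_(j < m) dg j * \prod_(k < m) (if k == j then 1 else g k x)).
Proof.
elim: m g dg => [|m IH] g dg H.
  have -> : (fun s => \prod_(i < 0) g i s) = cst 1.
    by apply/funext => s; rewrite big_ord0.
  rewrite big_ord0; exact: is_derive_cst.
have -> : (fun s => \prod_(i < m.+1) g i s)
    = (fun s => \prod_(i < m) g (widen_ord (leqnSn m) i) s) * g ord_max.
  by apply/funext => s; rewrite big_ord_recr.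
have HH := is_deriveM (IH (fun i => g (widen_ord (leqnSn m) i)) (fun i => dg (widen_ord (leqnSn m) i)) (fun i => H _)) (H ord_max).
apply: is_derive_eq HH _ => /=.
have wneq : forall k : 'I_m, (widen_ord (leqnSn m) k == ord_max) = false.
  by move=> k; apply/negbTE; rewrite neq_ltn /= ltn_ord.
rewrite [RHS]big_ord_recr /= addrC; congr (_ + _).
  rewrite big_ord_recr /= eqxx mulr1 /GRing.scale /= mulrC; congr (_ * _).
  by apply: eq_bigr => i _; rewrite wneq.
rewrite /GRing.scale /= mulr_sumr. apply eq_bigr => i _.
rewrite big_ord_recr /= eq_sym wneq mulrCA; congr (_ * _).
by rewrite mulrC; congr (_ * _).
Qed.

Lemma is_derive_pow (f : R -> R) (n : nat) (x df : R) : is_derive x 1 f df ->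
  is_derive x 1 (fun s => f s ^+ n) (n%:R * f x ^+ n.-1 * df).
Proof.
move=> H; have := is_deriveX n H.
by rewrite -exprfctE.
Qed.

Lemma key (m q : nat) (j : 'I_m) (G : ('I_m -> nat) -> R) :
  \sum_(b : {ffun 'I_m -> 'I_q.+2} | (\sum_(i < m) (b i : nat))%N == q.+1)
     (b j : nat)%:R * G (fun i => (b i : nat))
  = \sum_(c : {ffun 'I_m -> 'I_q.+1} | (\sum_(i < m) (c i : nat))%N == q)
     (c j : nat).+1%:R * G (fun i => (c i + (i == j))%N).
Proof.
rewrite (bigID (fun b : {ffun 'I_m -> 'I_q.+2} => (0 < b j)%N)) /=.
rewrite [X in _ + X]big1 ?addr0; last first.
  by move=> b /andP[_]; rewrite lt0n negbK => /eqP ->; rewrite mul0r.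
pose h (c : {ffun 'I_m -> 'I_q.+1}) : {ffun 'I_m -> 'I_q.+2} :=
  [ffun i => inord (c i + (i == j))].
pose h' (b : {ffun 'I_m -> 'I_q.+2}) : {ffun 'I_m -> 'I_q.+1} :=
  [ffun i => inord (b i - (i == j))].
have hE c i : (h c i : nat) = (c i + (i == j))%N.
  rewrite ffunE inordK //; have := ltn_ord (c i); case: (i == j) => /=; lia.
have sumdelta : (\sum_(i < m) (i == j : nat) = 1)%N.
  rewrite (bigD1 j) //= eqxx big1 // => k /negbTE ->; by [].
rewrite (reindex_onto h h'); last first.
  move=> b /andP[/eqP Hs Hj]; apply/ffunP => i; apply: ord_inj.
  have Hb2 : (i != j) -> (b i + b j <= q.+1)%N.
    move=> ij; suff : (b i + b j <= \sum_(k < m) (b k : nat))%N by rewrite Hs.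
    rewrite (bigD1 i) //= (bigD1 j) /=; last by rewrite eq_sym.
    rewrite addnA; apply: leq_addr.
  rewrite hE ffunE inordK; last first.
    case: (eqVneq i j) => [eij|ij] /=.
      by subst i; rewrite ltnS leq_subLR add1n -ltnS; exact: ltn_ord.
    rewrite subn0; apply: leq_trans (Hb2 ij); rewrite -addn1 leq_add2l; exact: Hj.
  case: (eqVneq i j) => [eij|ij] /=; first by subst i; rewrite subnK.
  by rewrite subn0 addn0.
apply: eq_big => [c|c _].
  have -> : h' (h c) == c.
    apply/eqP/ffunP => i; apply: ord_inj; rewrite ffunE inordK hE addnK //.
  rewrite andbT.
  have -> : (\sum_(i < m) (h c i : nat) = \sum_(i < m) (c i : nat) + 1)%N.
    rewrite -sumdelta -big_split /=; apply: eq_bigr => i _; exact: hE.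
  by rewrite hE eqxx !addn1 andbT eqSS.
rewrite hE eqxx addn1; congr (_ * G _).
by apply/funext => i; rewrite hE.
Qed.

Lemma is_derive_scale (c : R) (f : R -> R) (x df : R) :
  is_derive x 1 f df -> is_derive x 1 (fun s => c * f s) (c * df).
Proof. by move=> H; have := is_deriveZ c H. Qed.

Lemma misum0 (m : nat) (F : ('I_m -> nat) -> R) : misum 0 F = F (fun _ => 0%N).
Proof.
have bi0 : forall (b : {ffun 'I_m -> 'I_1}) i, (b i : nat) = 0%N.
  by move=> b i; have := ltn_ord (b i); rewrite ltnS leqn0 => /eqP.
rewrite /misum (big_pred1 [ffun=> ord0]).
  by congr F; apply/funext => i; rewrite ffunE.
move=> b /=; rewrite big1; last by move=> i _; rewrite bi0.
rewrite eqxx; symmetry; apply/eqP/ffunP => i; rewrite ffunE; apply: ord_inj.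
by rewrite bi0.
Qed.

Lemma I1 (m p : nat) (j : 'I_m) (c : 'I_m -> nat) :
  (c j).+1%:R * multinom p (fun k => (c k + (k == j))%N) = multinom p c :> R.
Proof.
rewrite /multinom (bigD1 j) //= [X in _ = _ / X](bigD1 j) //= eqxx addn1 factS natrM.
have -> : \prod_(i < m | i != j) ((c i + (i == j))`!)%:R
        = \prod_(i < m | i != j) ((c i)`!)%:R :> R.
  by apply: eq_bigr => i /negbTE ->; rewrite addn0.
have nz1 : (c j).+1%:R != 0 :> R by rewrite pnatr_eq0.
have nz2 : ((c j)`!)%:R * \prod_(i < m | i != j) ((c i)`!)%:R != 0 :> R.
  rewrite mulf_eq0 negb_or pnatr_eq0 -lt0n fact_gt0 /=.
  by rewrite prodf_seq_neq0; apply/allP => i _; apply/implyP => _; rewrite pnatr_eq0 -lt0n fact_gt0.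
rewrite -mulrA; field. move: nz2; rewrite mulf_eq0 negb_or => /andP[-> ->] /=. by rewrite -natr1 addrC in nz1.
Qed.

Lemma I2 (m : nat) (th : 'I_m -> R) (j : 'I_m) (c : 'I_m -> nat) :
  mpow th (msq (fun k => (c k + (k == j))%N)) = mpow th (msq c) * th j ^+ (2 * c j + 1).
Proof.
rewrite /mpow /msq (bigD1 j) //= [X in _ = X * _](bigD1 j) //= eqxx.
have -> : \prod_(i < m | i != j) th i ^+ ((c i + (i == j)) ^ 2)
        = \prod_(i < m | i != j) th i ^+ ((c i) ^ 2).
  by apply: eq_bigr => i /negbTE ->; rewrite addn0.
have -> : ((c j + true) ^ 2 = c j ^ 2 + (2 * c j + 1))%N.
  rewrite /= addn1 !expnS expn0 !muln1 mulSn mulnS; lia.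
rewrite exprD; ring.
Qed.

Lemma I3 (m : nat) (v : 'I_m -> R) (j : 'I_m) (c : 'I_m -> nat) :
  v j ^+ (c j + (j == j)).-1 *
  \prod_(k < m) (if k == j then 1 else v k ^+ (c k + (k == j))) = mpow v c.
Proof.
rewrite /mpow (bigD1 j) //= [RHS](bigD1 j) //= eqxx addn1 /= mul1r.
congr (_ * _); apply: eq_bigr => i /negbTE ->; by rewrite addn0.
Qed.
End H.

Lemma Hp_is_derive (R : realType) (m : nat) (th : 'I_m -> R) (u : R -> 'I_m -> R)
  (du : 'I_m -> R) (p : nat) (t : R) :
  (forall j, is_derive t 1 (fun s => u s j) (du j)) ->
  is_derive t 1 (fun s => Hp th p (u s))
   (misum p (fun b => multinom p b * mpow th (msq b) *
      \sum_(j < m) ((b j)%:R * u t j ^+ (b j).-1 * du j) *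
         \prod_(k < m) (if k == j then 1 else u t k ^+ b k))).
Proof.
move=> hu; rewrite /Hp /misum; apply: is_derive_bigsum => b _.
apply: is_derive_scale; rewrite /mpow.
apply: (@is_derive_bigprod _ _ (fun j s => u s j ^+ (b j : nat))) => j.
exact: is_derive_pow.
Qed.

Lemma mainq (R : realType) (m : nat) (th : 'I_m -> R) (u : R -> 'I_m -> R)
  (hu_der : forall t j, derivable (fun s => u s j) t 1) (q : nat) (t : R) :
  derive1 (fun s => Hp th q.+1 (u s)) t
  = misum q (fun b => multinom q.+1 b * mpow th (msq b) * mpow (u t) b
      * \sum_(j < m) th j ^+ (2 * b j + 1) * derive1 (fun s => u s j) t).
Proof.
set du := fun j => derive1 (fun s => u s j) t.
have hu j : is_derive t 1 (fun s => u s j) (du j).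
  by rewrite /du derive1E; apply: derivableP.
rewrite derive1E (derive_val (is_derive := @Hp_is_derive R m th u du q.+1 t hu)).
rewrite /misum.
under eq_bigr do rewrite mulr_sumr.
rewrite exchange_big /=.
under [RHS]eq_bigr do rewrite mulr_sumr.
rewrite [RHS]exchange_big /=.
apply: eq_bigr => j _.
pose G (be : 'I_m -> nat) := multinom q.+1 be * mpow th (msq be) *
   (u t j ^+ (be j).-1 * du j * \prod_(k < m) (if k == j then 1 else u t k ^+ be k)).
transitivity (\sum_(b : {ffun 'I_m -> 'I_q.+2} | (\sum_(i < m) (b i : nat))%N == q.+1)
     (b j : nat)%:R * G (fun i => (b i : nat))).
  by apply: eq_bigr => b _; rewrite /G; ring.
rewrite key; apply: eq_bigr => c _; rewrite /G /=.
have e1 := @I1 R _ q.+1 j (fun i => (c i : nat)).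
have e3 := @I3 R _ (u t) j (fun i => (c i : nat)).
rewrite /= in e1 e3.
rewrite I2 -e1 -e3 /du; ring.
Qed.

Theorem lemmaA1 (R : realType) (m1 : nat) (theta : 'I_m1 -> R)
  (u : R -> 'I_m1 -> R)
  (htheta : forall j, 0 < theta j)
  (hu_nonneg : forall t j, 0 <= u t j)
  (hu_der : forall t j, derivable (fun s => u s j) t 1) :
  (forall t, derive1 (fun s => Hp theta 0 (u s)) t = 0)
  /\ (forall t, derive1 (fun s => Hp theta 1 (u s)) t
                = \sum_(j < m1) theta j * derive1 (fun s => u s j) t)
  /\ (forall (p : nat) t, (2 <= p)%N ->
        derive1 (fun s => Hp theta p (u s)) t
        = @misum R m1 (p.-1)%N (fun b => multinom p b * mpow theta (msq b) * mpow (u t) b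
              * \sum_(j < m1) theta j ^+ (2 * b j + 1) * derive1 (fun s => u s j) t)).
Proof.
have mp0 : forall (v : 'I_m1 -> R), mpow v (fun _ => 0%N) = 1.
  by move=> v; rewrite /mpow big1.
have mq0 : forall (v : 'I_m1 -> R), mpow v (msq (fun _ => 0%N)) = 1.
  by move=> v; rewrite /mpow big1.
have mn0 : forall p, multinom p (fun _ : 'I_m1 => 0%N) = (p`!)%:R :> R.
  by move=> p; rewrite /multinom big1 ?invr1 ?mulr1.
split.
  move=> t.
  have -> : (fun s => Hp theta 0 (u s)) = cst 1.
    by apply/funext => s; rewrite /Hp misum0 mp0 mq0 mn0 !mulr1.
  exact: derive1_cst.
split.
  move=> t; rewrite mainq // misum0 mp0 mq0 mn0 !mulr1 mul1r.
  by apply: eq_bigr => j _; rewrite muln0 add0n expr1.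
case=> [|p] // t _; exact: mainq.
Qed.
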